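(* Assume the Perturbed Composite Setting (see context). Let $\beta\ge\rho$, $\gamma:=\rho/\beta$, suppose $\varepsilon<\frac{\mu^2\gamma}{56\rho}$, and let $x_0\in\mathcal{X}$ with $\frac{14\varepsilon}{\mu}<\mathrm{dist}(x_0,\mathcal{X}^* )<\frac{\gamma\mu}{4\rho}$. Define the prox-linear iterates on the perturbed problem $$x_{k+1}=\operatorname{argmin}_{x\in\mathcal{X}}\Big\{h\big(F(x_k)+e+\nabla F(x_k)(x-x_k)\big)+\frac\beta2\|x-x_k\|^2\Big\}.$$ Then for every $k\ge0$ with $\mathrm{dist}(x_{k+1},\mathcal{X}^* )\ge14\varepsilon/\mu$, $$\mathrm{dist}(x_{k+1},\mathcal{X}^* )\le\frac{7\beta}{6\mu}\mathrm{dist}^2(x_k,\mathcal{X}^* ).$$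
   Context: Perturbed Composite Setting: $\mathbf{E},\mathbf{Y}$ are Euclidean spaces ($\|\cdot\|$ the Euclidean norm on $\mathbf{E}$), $\mathcal{X}\subset\mathbf{E}$ nonempty closed convex, $F\colon\mathbf{E}\to\mathbf{Y}$ continuously differentiable with Jacobian $\nabla F(x)$, $h\colon\mathbf{Y}\to\mathbb{R}$ convex and $\eta$-Lipschitz with respect to a norm $|||\cdot|||$ on $\mathbf{Y}$. Set $f=h\circ F$, $f_x(y)=h(F(x)+\nabla F(x)(y-x))$, and assume $\mathcal{X}^*:=\operatorname{argmin}_{\mathcal{X}}f\ne\emptyset$ and constants $\mu,\rho>0$ with $|f(y)-f_x(y)|\le\frac\rho2\|y-x\|^2$ for all $x,y\in\mathcal{X}$ and $f(x)-\min_{\mathcal{X}}f\ge\mu\,\mathrm{dist}(x,\mathcal{X}^* )$ for all $x\in\mathcal{X}$. Fix $e\in\mathbf{Y}$ and set $\tilde f(x)=h(F(x)+e)$, $\varepsilon:=\eta|||e|||$. $\mathrm{dist}$ is the Euclidean distance. *)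

(* Defs.v *)
From Stdlib Require Fin.
From Stdlib Require Import Reals Lra ClassicalEpsilon.
Open Scope R_scope.

Definition vec (n : nat) := Fin.t n -> R.

Fixpoint fsum (n : nat) : (Fin.t n -> R) -> R :=
  match n return (Fin.t n -> R) -> R with
  | O => fun _ => 0
  | S m => fun f => f Fin.F1 + fsum m (fun i => f (Fin.FS i))
  end.

Definition vadd {n} (u v : vec n) : vec n := fun i => u i + v i.
Definition vsub {n} (u v : vec n) : vec n := fun i => u i - v i.
Definition vscal {n} (c : R) (v : vec n) : vec n := fun i => c * v i.
Definition dot {n} (u v : vec n) : R := fsum n (fun i => u i * v i).
Definition enorm {n} (v : vec n) : R := sqrt (dot v v).

Definition mat (m n : nat) := Fin.t m -> Fin.t n -> R.
Definition mapply {m n} (A : mat m n) (v : vec n) : vec m :=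
  fun i => fsum n (fun j => A i j * v j).

Definition is_norm {m} (N : vec m -> R) : Prop :=
  (forall v, 0 <= N v) /\
  (forall v, N v = 0 -> v = (fun _ => 0)) /\
  (forall c v, N (vscal c v) = Rabs c * N v) /\
  (forall u v, N (vadd u v) <= N u + N v).

Definition convex_subset {n} (X : vec n -> Prop) : Prop :=
  forall x y t, X x -> X y -> 0 <= t <= 1 ->
    X (vadd (vscal t x) (vscal (1 - t) y)).

Definition closed_subset {n} (X : vec n -> Prop) : Prop :=
  forall x, (forall eps, 0 < eps -> exists y, X y /\ enorm (vsub y x) < eps) -> X x.

Definition convex_fun {m} (h : vec m -> R) : Prop :=
  forall u v t, 0 <= t <= 1 ->
    h (vadd (vscal t u) (vscal (1 - t) v)) <= t * h u + (1 - t) * h v.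

Definition lipschitz_wrt {m} (N : vec m -> R) (eta : R) (h : vec m -> R) : Prop :=
  forall u v, Rabs (h u - h v) <= eta * N (vsub u v).

Definition has_jacobian {n m} (F : vec n -> vec m) (DF : vec n -> mat m n) : Prop :=
  forall x eps, 0 < eps -> exists delta, 0 < delta /\
    forall y, enorm (vsub y x) < delta ->
      enorm (vsub (vsub (F y) (F x)) (mapply (DF x) (vsub y x)))
        <= eps * enorm (vsub y x).

Definition continuous_jacobian {n m} (DF : vec n -> mat m n) : Prop :=
  forall x eps, 0 < eps -> exists delta, 0 < delta /\
    forall y, enorm (vsub y x) < delta ->
      forall i j, Rabs (DF y i j - DF x i j) < eps.

(* Euclidean distance to a set: the infimum of ||x - y|| over y in S
   (well defined for nonempty S). *)
Definition edist {n} (S : vec n -> Prop) (x : vec n) : R :=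
  epsilon (inhabits 0)
    (fun d => (forall y, S y -> d <= enorm (vsub x y)) /\
              (forall d', (forall y, S y -> d' <= enorm (vsub x y)) -> d' <= d)).

Definition argmin_set {n} (X : vec n -> Prop) (f : vec n -> R) (x : vec n) : Prop :=
  X x /\ forall y, X y -> f x <= f y.

(* Main.v *)
Require Import Defs.
From Stdlib Require Import Reals Lra Psatz ClassicalEpsilon FunctionalExtensionality.
Open Scope R_scope.

Lemma edist_spec {n} (S : vec n -> Prop) (a : vec n) : (exists y, S y) ->
  (forall y, S y -> edist S a <= enorm (vsub a y)) /\
  (forall d', (forall y, S y -> d' <= enorm (vsub a y)) -> d' <= edist S a).
Proof.
  intros [y0 Hy0]. unfold edist. apply epsilon_spec.
  set (E := fun r => exists y, S y /\ r = - enorm (vsub a y)).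
  assert (HB : bound E).
  { exists 0. intros r [y [_ ->]]. unfold enorm. pose proof (sqrt_pos (dot (vsub a y) (vsub a y))). lra. }
  assert (HE : exists r, E r) by (exists (- enorm (vsub a y0)); exists y0; auto).
  destruct (completeness E HB HE) as [m [Hub Hl]].
  exists (- m). split.
  - intros y Hy. assert (E (- enorm (vsub a y))) by (exists y; auto).
    specialize (Hub _ H). lra.
  - intros d' Hd'. assert (m <= - d'). { apply Hl. intros r [y [Hy ->]]. specialize (Hd' y Hy). lra. }
    lra.
Qed.

Lemma abs_between (a b : R) : Rabs a <= b -> - b <= a <= b.
Proof. intros H. unfold Rabs in H. destruct (Rcase_abs a); lra. Qed.

Lemma enorm_sym {n} (u v : vec n) : enorm (vsub u v) = enorm (vsub v u).
Proof.
  unfold enorm, dot, vsub.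
  replace (fun i => (u i - v i) * (u i - v i)) with (fun i => (v i - u i) * (v i - u i)).
  reflexivity. apply functional_extensionality; intros; ring.
Qed.

Lemma pert_sub {m} (u e w : vec m) : vsub (vadd (vadd u e) w) (vadd u w) = e.
Proof. apply functional_extensionality; intros; unfold vsub, vadd; ring. Qed.

Theorem theorem9p7
  (n m : nat) (X : vec n -> Prop) (F : vec n -> vec m) (DF : vec n -> mat m n)
  (h : vec m -> R) (N : vec m -> R) (eta mu rho beta : R) (e : vec m)
  (x : nat -> vec n)
  (HXne : exists x0, X x0) (HXcl : closed_subset X) (HXcv : convex_subset X)
  (HFdiff : has_jacobian F DF) (HFc1 : continuous_jacobian DF)
  (HN : is_norm N) (Hhcvx : convex_fun h) (Hhlip : lipschitz_wrt N eta h)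
  (Hstar : exists xs, argmin_set X (fun y => h (F y)) xs)
  (Hmu : 0 < mu) (Hrho : 0 < rho)
  (Hquad : forall a y, X a -> X y ->
     Rabs (h (F y) - h (vadd (F a) (mapply (DF a) (vsub y a))))
       <= rho / 2 * enorm (vsub y a) ^ 2)
  (Hsharp : forall a xs, X a -> argmin_set X (fun y => h (F y)) xs ->
     h (F a) - h (F xs) >= mu * edist (argmin_set X (fun y => h (F y))) a)
  (Hbeta : beta >= rho)
  (Heps : eta * N e < mu ^ 2 * (rho / beta) / (56 * rho))
  (Hx0 : X (x 0%nat))
  (Hx0lo : 14 * (eta * N e) / mu < edist (argmin_set X (fun y => h (F y))) (x 0%nat))
  (Hx0hi : edist (argmin_set X (fun y => h (F y))) (x 0%nat) < (rho / beta) * mu / (4 * rho))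
  (Hiter : forall k : nat,
     argmin_set X
       (fun y => h (vadd (vadd (F (x k)) e) (mapply (DF (x k)) (vsub y (x k))))
                 + beta / 2 * enorm (vsub y (x k)) ^ 2)
       (x (S k))) :
  forall k : nat,
    edist (argmin_set X (fun y => h (F y))) (x (S k)) >= 14 * (eta * N e) / mu ->
    edist (argmin_set X (fun y => h (F y))) (x (S k))
      <= 7 * beta / (6 * mu) * edist (argmin_set X (fun y => h (F y))) (x k) ^ 2.
Proof.
  intros k Hlo.
  set (Xs := argmin_set X (fun y => h (F y))) in *.
  set (d0 := edist Xs (x k)). set (d1 := edist Xs (x (S k))).
  set (eps := eta * N e).
  assert (HXk : X (x k)) by (destruct k; [exact Hx0 | apply (Hiter k)]).
  assert (HXk1 : X (x (S k))) by apply (Hiter k).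
  destruct (edist_spec Xs (x k) Hstar) as [Hlb Hglb].
  assert (Hd0 : 0 <= d0).
  { apply Hglb. intros y _. unfold enorm. apply sqrt_pos. }
  assert (Hpert : forall y, Rabs (h (vadd (vadd (F (x k)) e) (mapply (DF (x k)) (vsub y (x k))))
      - h (vadd (F (x k)) (mapply (DF (x k)) (vsub y (x k))))) <= eps).
  { intros y. unfold eps. pose proof (Hhlip (vadd (vadd (F (x k)) e) (mapply (DF (x k)) (vsub y (x k))))
      (vadd (F (x k)) (mapply (DF (x k)) (vsub y (x k))))) as Hl. rewrite pert_sub in Hl. exact Hl. }
  assert (Hkey : forall xs, Xs xs ->
     mu * d1 <= beta * enorm (vsub (x k) xs) ^ 2 + 2 * eps).
  { intros xs Hxs.
    pose proof (Hsharp _ _ HXk1 Hxs) as H1. fold Xs in H1. fold d1 in H1.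
    destruct Hxs as [HXxs _].
    pose proof (Hquad _ _ HXk HXk1) as H2.
    pose proof (Hquad _ _ HXk HXxs) as H3.
    pose proof (proj2 (Hiter k) xs HXxs) as H4. simpl in H4.
    pose proof (Hpert (x (S k))) as H5. pose proof (Hpert xs) as H6.
    rewrite (enorm_sym (x k) xs).
    apply abs_between in H2. apply abs_between in H3.
    apply abs_between in H5. apply abs_between in H6.
    assert (0 <= enorm (vsub (x (S k)) (x k)) ^ 2) by apply pow2_ge_0.
    assert (0 <= enorm (vsub xs (x k)) ^ 2) by apply pow2_ge_0.
    assert (rho * enorm (vsub (x (S k)) (x k)) ^ 2 <= beta * enorm (vsub (x (S k)) (x k)) ^ 2) by nra.
    assert (rho * enorm (vsub xs (x k)) ^ 2 <= beta * enorm (vsub xs (x k)) ^ 2) by nra.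
    lra. }
  assert (Hmain : mu * d1 <= beta * d0 ^ 2 + 2 * eps).
  { destruct (Rle_or_lt (mu * d1) (beta * d0 ^ 2 + 2 * eps)) as [H|H]; [exact H|exfalso].
    set (g := mu * d1 - (beta * d0 ^ 2 + 2 * eps)).
    assert (Hg : 0 < g) by (unfold g; lra).
    assert (Hbp : 0 < beta) by lra.
    set (del := Rmin 1 (g / (beta * (2 * d0 + 1) + 1))).
    assert (Hq : 0 < beta * (2 * d0 + 1) + 1) by nra.
    assert (Hdel : 0 < del).
    { unfold del. apply Rmin_pos; [lra | apply Rdiv_lt_0_compat; lra]. }
    assert (Hdel1 : del <= 1) by apply Rmin_l.
    assert (Hdel2 : del <= g / (beta * (2 * d0 + 1) + 1)) by apply Rmin_r.
    assert (Hdel3 : del * (beta * (2 * d0 + 1) + 1) <= g).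
    { apply Rmult_le_compat_r with (r := beta * (2 * d0 + 1) + 1) in Hdel2; [|lra].
      unfold Rdiv in Hdel2. rewrite Rmult_assoc, Rinv_l in Hdel2; lra. }
    assert (exists xs, Xs xs /\ enorm (vsub (x k) xs) < d0 + del) as [xs [Hxs Hn]].
    { apply Classical_Prop.NNPP. intros Hno.
      assert (d0 + del <= d0); [|lra].
      apply Hglb. intros y Hy. apply Rnot_lt_le. intros Hc. apply Hno. exists y; auto. }
    pose proof (Hkey xs Hxs).
    assert (Hnn : 0 <= enorm (vsub (x k) xs)) by (unfold enorm; apply sqrt_pos).
    assert (enorm (vsub (x k) xs) ^ 2 <= (d0 + del) ^ 2) by nra.
    assert (0 <= beta * del * (1 - del)) by (apply Rmult_le_pos; [apply Rmult_le_pos|]; lra).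
    assert (beta * (d0 + del) ^ 2 <= beta * d0 ^ 2 + del * (beta * (2 * d0 + 1))) by (ring_simplify; nra).
    assert (beta * enorm (vsub (x k) xs) ^ 2 <= beta * (d0 + del) ^ 2) by (apply Rmult_le_compat_l; lra).
    unfold g in Hdel3. lra. }
  assert (14 * eps <= mu * d1).
  { apply Rge_le in Hlo. fold eps d1 in Hlo.
    apply Rmult_le_compat_r with (r := mu) in Hlo; [|lra].
    replace (14 * eps / mu * mu) with (14 * eps) in Hlo by (field; lra). lra. }
  assert (Hb : 6 * mu * d1 <= 7 * beta * d0 ^ 2) by lra.
  replace (7 * beta / (6 * mu) * d0 ^ 2) with ((7 * beta * d0 ^ 2) / (6 * mu)) by (field; lra).
  apply Rmult_le_reg_r with (r := 6 * mu); [lra|].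
  unfold Rdiv. rewrite Rmult_assoc, Rinv_l; lra.
Qed.
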